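(* Let $(R,\mathfrak m)$ be a one-dimensional Cohen–Macaulay local ring admitting a canonical module $\omega_R$ with $R\subseteq\omega_R\subseteq\overline{R}$, let $B=\mathfrak m:\mathfrak m$, and let $\alpha\in\mathfrak m$. Then: (1) if $R$ is gAGL, $B$ is local with maximal ideal $\mathfrak n$ and $R/\mathfrak m\cong B/\mathfrak n$, then $\mathfrak m^2\subseteq R:\omega_R^2$; (2) if $R$ is not Gorenstein and $\alpha\mathfrak m=\mathfrak m^2$, then $(R:\omega_R):\mathfrak m=\{m/\alpha\mid m\in R:\omega_R\}$; (3) if $\alpha\mathfrak m=\mathfrak m^2$ and $R$ is not almost Gorenstein, then $\alpha\notin R:\omega_R$; (4) there exists a minimal system of generators of $\mathfrak m$ all of whose elements are regular (non-zero-divisors).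
   Context: $Q(R)$ is the total ring of fractions and $\overline R$ the integral closure of $R$ in $Q(R)$; for fractional ideals $I,J$, $I:J=\{r\in Q(R)\mid rJ\subseteq I\}$. $R$ is almost Gorenstein if $\mathfrak m\,\omega_R\subseteq\mathfrak m$. With $J(B)$ the Jacobson radical of $B$, $R$ is gAGL if $\mathfrak m\,\omega_R\,J(B)\subseteq R$. *)

(* Defs.v *)
(* A one-dimensional ring R together with its total ring of
   fractions Q(R) is modelled as a predicate R on a commutative ring Q that is
   (required to be) the total ring of fractions of R. *)
From HB Require Import structures.
From mathcomp Require Import all_boot all_order all_algebra.
Set Implicit Arguments. Unset Strict Implicit. Unset Printing Implicit Defensive.
Import GRing.Theory.
Local Open Scope ring_scope.

Section Defs.
Variable Q : comUnitRingType.

Definition qsubset (A B : Q -> Prop) := forall x, A x -> B x.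
Definition qseteq (A B : Q -> Prop) := qsubset A B /\ qsubset B A.
Definition qproper (A B : Q -> Prop) := qsubset A B /\ exists x, B x /\ ~ A x.

Definition is_subring (S : Q -> Prop) :=
  [/\ S 0, S 1, (forall x y, S x -> S y -> S (x - y))
    & (forall x y, S x -> S y -> S (x * y))].

Definition regular_in (R : Q -> Prop) (x : Q) :=
  R x /\ forall y, R y -> x * y = 0 -> y = 0.

Definition total_ring_of_fractions (R : Q -> Prop) :=
  (forall s, regular_in R s -> s \is a GRing.unit) /\
  (forall q, exists r s, R r /\ regular_in R s /\ q = r / s).

Definition span (R : Q -> Prop) (g : seq Q) : Q -> Prop :=
  fun x => exists c : seq Q, size c = size g /\ (forall i, R c`_i) /\
    x = \sum_(i < size g) c`_i * g`_i.

Definition submodule (R M : Q -> Prop) :=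
  [/\ M 0, (forall x y, M x -> M y -> M (x + y))
    & (forall r x, R r -> M x -> M (r * x))].

Definition ideal_of (S I : Q -> Prop) := qsubset I S /\ submodule S I.

Definition fin_gen (R M : Q -> Prop) := exists g : seq Q, qseteq M (span R g).

Definition noetherian (R : Q -> Prop) :=
  forall I, ideal_of R I -> fin_gen R I.

Definition prime_ideal (R P : Q -> Prop) :=
  [/\ ideal_of R P, ~ P 1 &
      forall x y, R x -> R y -> P (x * y) -> P x \/ P y].

Definition krull_dim_one (R : Q -> Prop) :=
  (exists P0 P1, [/\ prime_ideal R P0, prime_ideal R P1 & qproper P0 P1]) /\
  ~ (exists P0 P1 P2, [/\ prime_ideal R P0, prime_ideal R P1, prime_ideal R P2,
                         qproper P0 P1 & qproper P1 P2]).

Definition local_with (S m : Q -> Prop) :=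
  [/\ ideal_of S m, ~ m 1 &
      forall r, S r -> ~ m r -> exists u, S u /\ r * u = 1].

Definition maximal_ideal (S N : Q -> Prop) :=
  [/\ ideal_of S N, ~ N 1 &
      forall J, ideal_of S J -> qsubset N J -> J 1 \/ qseteq J N].

Definition jacobson (B : Q -> Prop) : Q -> Prop :=
  fun x => B x /\ forall N, maximal_ideal B N -> N x.

Definition colon (I J : Q -> Prop) : Q -> Prop :=
  fun q => forall j, J j -> I (q * j).

Definition prod (I J : Q -> Prop) : Q -> Prop :=
  fun x => exists s : seq (Q * Q),
    (forall p, p \in s -> I p.1 /\ J p.2) /\ x = \sum_(p <- s) p.1 * p.2.

Definition smul (a : Q) (I : Q -> Prop) : Q -> Prop :=
  fun x => exists y, I y /\ x = a * y.

Definition integral_closure (R : Q -> Prop) : Q -> Prop :=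
  fun q => exists n (c : 'I_n -> Q), (forall i, R (c i)) /\
    q ^+ n + \sum_(i < n) c i * q ^+ i = 0.

(* Canonical module (for a finitely generated R-submodule K of Q containing R,
   over a one-dimensional CM local ring (R,m)):  there is a regular x in m such
   that K/xK is a canonical module of the Artinian local ring R/xR, i.e. K/xK is
   a faithful R/xR-module whose socle is one-dimensional over R/m
   (Bruns-Herzog 3.3.5 and the Artinian case). *)
Definition canonical_module (R m K : Q -> Prop) :=
  submodule R K /\ fin_gen R K /\
  exists x, [/\ m x, regular_in R x,
    (forall r, R r -> (forall k, K k -> smul x K (r * k)) -> smul x R r) &
    exists s, [/\ K s, ~ smul x K s, (forall a, m a -> smul x K (a * s)) &
      forall w, K w -> (forall a, m a -> smul x K (a * w)) ->
        exists r, R r /\ smul x K (w - r * s)]].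

Definition gorenstein (R m : Q -> Prop) := canonical_module R m R.

Definition almost_gorenstein (R m w : Q -> Prop) := qsubset (prod m w) m.

Definition gAGL (R m w : Q -> Prop) :=
  qsubset (prod (prod m w) (jacobson (colon m m))) R.

Definition min_gens (R M : Q -> Prop) (g : seq Q) :=
  qseteq M (span R g) /\
  forall g' : seq Q, qseteq M (span R g') -> (size g <= size g')%N.

End Defs.

(* Main.v *)
Require Import Defs.
From HB Require Import structures.
From mathcomp Require Import all_boot all_order all_algebra.
From mathcomp Require Import ring.
From Stdlib Require Import Classical.
Set Implicit Arguments. Unset Strict Implicit. Unset Printing Implicit Defensive.
Import GRing.Theory.
Local Open Scope ring_scope.

Lemma sr_add (Q : comUnitRingType) (R : Q -> Prop) :
  is_subring R -> forall x y, R x -> R y -> R (x + y).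
Proof.
move=> [R0 R1 RB RM] x y Rx Ry.
have -> : x + y = x - (0 - y) by rewrite sub0r opprK.
exact: RB _ _ Rx (RB _ _ R0 Ry).
Qed.

Lemma sr_opp (Q : comUnitRingType) (R : Q -> Prop) :
  is_subring R -> forall x, R x -> R (- x).
Proof. move=> [R0 R1 RB RM] x Rx; rewrite -sub0r; exact: RB. Qed.

Lemma sr_exp (Q : comUnitRingType) (R : Q -> Prop) :
  is_subring R -> forall x n, R x -> R (x ^+ n).
Proof.
move=> [R0 R1 RB RM] x n Rx; elim: n => [|n IH]; first by rewrite expr0.
by rewrite exprS; apply: RM.
Qed.

Lemma sm_opp (Q : comUnitRingType) (R S : Q -> Prop) :
  is_subring R -> submodule R S -> forall x, S x -> S (- x).
Proof.
move=> HR [S0 SD SM] x Sx; rewrite -mulN1r; apply: SM => //.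
apply: sr_opp => //; by case: HR.
Qed.

Lemma sm_sum (Q : comUnitRingType) (S : Q -> Prop) (I : eqType) (s : seq I) (F : I -> Q) :
  S 0 -> (forall x y, S x -> S y -> S (x + y)) ->
  (forall i, i \in s -> S (F i)) -> S (\sum_(i <- s) F i).
Proof.
move=> S0 SD; elim: s => [|a s IH] H; first by rewrite big_nil.
rewrite big_cons; apply: SD; first by apply: H; rewrite inE eqxx.
by apply: IH => i hi; apply: H; rewrite inE hi orbT.
Qed.

Lemma sr_sum (Q : comUnitRingType) (R : Q -> Prop) (I : eqType) (s : seq I) (F : I -> Q) :
  is_subring R -> (forall i, i \in s -> R (F i)) -> R (\sum_(i <- s) F i).
Proof. move=> HR; apply: sm_sum; [by case: HR | exact: sr_add]. Qed.

Lemma prod_mem (Q : comUnitRingType) (I J : Q -> Prop) a b :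
  I a -> J b -> prod I J (a * b).
Proof.
move=> Ia Jb; exists [:: (a, b)]; split; last by rewrite big_cons big_nil addr0.
by move=> p; rewrite inE => /eqP -> .
Qed.
Lemma span_sub (Q : comUnitRingType) (R S : Q -> Prop) (g : seq Q) :
  submodule R S -> (forall i, (i < size g)%N -> S g`_i) -> qsubset (Defs.span R g) S.
Proof.
move=> [S0 SD SM] Hg z [c [_ [Rc ->]]].
elim/big_ind: _ => //.
move=> i _; apply: SM => //; exact: Hg.
Qed.

Lemma span_mem (Q : comUnitRingType) (R : Q -> Prop) (g : seq Q) i :
  is_subring R -> (i < size g)%N -> Defs.span R g g`_i.
Proof.
move=> [R0 R1 _ _] hi.
exists (mkseq (fun j => if j == i then 1 else 0) (size g)); split; first by rewrite size_mkseq.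
split.
  move=> j; case: (ltnP j (size g)) => hj.
    by rewrite nth_mkseq //; case: ifP.
  by rewrite nth_default // size_mkseq.
rewrite (bigD1 (Ordinal hi)) //= nth_mkseq // eqxx mul1r big1 ?addr0 //.
move=> j /eqP hj; rewrite nth_mkseq // ifN ?mul0r //.
apply/eqP => hji; apply: hj; apply: val_inj => /=; exact: hji.
Qed.

Lemma R_mkseq (Q : comUnitRingType) (R : Q -> Prop) (f : nat -> Q) n j :
  R 0 -> (forall i, (i < n)%N -> R (f i)) -> R (mkseq f n)`_j.
Proof.
move=> R0 H; case: (ltnP j n) => hj; first by rewrite nth_mkseq //; exact: H.
by rewrite nth_default // size_mkseq.
Qed.

Lemma span_submod (Q : comUnitRingType) (R : Q -> Prop) (g : seq Q) :
  is_subring R -> submodule R (Defs.span R g).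
Proof.
move=> HR; have [R0 R1 RB RM] := HR; split.
- exists (nseq (size g) 0); split; first by rewrite size_nseq.
  split; first by move=> i; rewrite nth_nseq; case: ifP.
  by rewrite big1 // => i _; rewrite nth_nseq ltn_ord mul0r.
- move=> x y [c1 [_ [R1c ->]]] [c2 [_ [R2c ->]]].
  exists (mkseq (fun i => c1`_i + c2`_i) (size g)); split; first by rewrite size_mkseq.
  split; first by move=> j; apply: R_mkseq => // i _; apply: sr_add.
  rewrite -big_split /=; apply: eq_bigr => i _; by rewrite nth_mkseq // mulrDl.
- move=> r x Rr [c [_ [Rc ->]]].
  exists (mkseq (fun i => r * c`_i) (size g)); split; first by rewrite size_mkseq.
  split; first by move=> j; apply: R_mkseq => // i _; apply: RM.
  rewrite mulr_sumr; apply: eq_bigr => i _; by rewrite nth_mkseq // mulrA.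
Qed.

Lemma noinv (Q : comUnitRingType) (R m : Q -> Prop) y z :
  is_subring R -> local_with R m -> m y -> integral_closure R z -> y * z = 1 -> False.
Proof.
move=> HR [[mR [m0 mD mM]] m1 _] my [n [c [Rc Hz]]] yz.
have HR' := HR; case: HR' => [R0 R1 RB RM].
have E : y ^+ n * (z ^+ n + \sum_(i < n) c i * z ^+ i)
         = 1 + \sum_(i < n) c i * y ^+ (n - i).
  rewrite mulrDr -exprMn yz expr1n mulr_sumr; congr (_ + _).
  apply: eq_bigr => i _.
  have hi : (i <= n)%N by apply: ltnW.
  rewrite -{1}(subnK hi) exprD mulrCA -mulrA -exprMn yz expr1n mulr1.
  by [].
have hm : m (\sum_(i < n) c i * y ^+ (n - i)).
  apply: sm_sum => // i _.
  have hpos : (0 < n - i)%N by rewrite subn_gt0.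
  rewrite -(prednK hpos) exprSr mulrA; apply: mM => //.
  by apply: RM; [exact: Rc | apply: sr_exp => //; exact: mR].
apply: m1.
have -> : (1 : Q) = - \sum_(i < n) c i * y ^+ (n - i).
  by apply/eqP; rewrite -addr_eq0 -E Hz mulr0.
by apply: (sm_opp HR) => //; split.
Qed.

Lemma in_m (Q : comUnitRingType) (R m w : Q -> Prop) y k :
  is_subring R -> local_with R m -> submodule R w -> qsubset w (integral_closure R) ->
  m y -> w k -> R (y * k) -> m (y * k).
Proof.
move=> HR Hl [w0 wD wM] wI my wk Ryk.
apply: NNPP => nm.
have [_ _ Hu] := Hl.
have [u [Ru yku]] := Hu _ Ryk nm.
apply: (noinv HR Hl my (wI _ (wM _ _ Ru wk))).
rewrite -yku; ring.
Qed.

Lemma part1 (Q : comUnitRingType) (R m w n : Q -> Prop) :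
  is_subring R -> local_with R m -> submodule R w -> qsubset w (integral_closure R) ->
  gAGL R m w -> local_with (colon m m) n ->
  (forall b, colon m m b -> exists r, R r /\ n (b - r)) ->
  qsubset (Defs.prod m m) (colon R (Defs.prod w w)).
Proof.
move=> HR Hl Hw wI Hg Hn Hres.
have HR' := HR; case: HR' => [R0 R1 RB RM].
have Hl' := Hl; case: Hl' => [[mR [m0 mD mM]] m1 mU].
have Hn' := Hn; case: Hn' => [[nB [n0 nD nM]] n1 nU].
have F1 : forall r, R r -> colon m m r by move=> r Rr j mj; apply: mM.
have F2 : forall a, m a -> colon m m a by move=> a ma; apply: F1; apply: mR.
have F3 : forall a, m a -> n a.
  move=> a ma; apply: NNPP => na.
  have [u [Bu au]] := nU a (F2 a ma) na.
  by apply: m1; rewrite -au mulrC; apply: Bu.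
have J : forall t, n t -> jacobson (colon m m) t.
  move=> t nt; split; first exact: nB.
  move=> N [[NB [N0 ND NM]] N1 Nmax].
  have NsubN : qsubset N n.
    move=> x Nx; apply: NNPP => nx.
    have [u [Bu xu]] := nU x (NB x Nx) nx.
    by apply: N1; rewrite -xu mulrC; apply: NM.
  have In : ideal_of (colon m m) n by split => //; split.
  by case: (Nmax n In NsubN) => // [[h _]]; apply: h.
have T : forall a k t, m a -> w k -> n t -> R (a * k * t).
  move=> a k t ma wk nt; apply: Hg; apply: prod_mem; last exact: J.
  exact: prod_mem.
have P0 : forall a k, m a -> w k -> colon m m (a * k).
  move=> a k ma wk j mj.
  have E : a * k * j = (a * j) * k by ring.
  rewrite E; apply: (in_m HR Hl Hw wI) => //; first by apply: mM => //; apply: mR.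
  by rewrite -E; apply: T => //; apply: F3.
have P : forall a k, m a -> w k -> n (a * k).
  move=> a k ma wk; apply: NNPP => nak.
  have [c [Bc akc]] := nU _ (P0 a k ma wk) nak.
  have nsubm : forall t, n t -> m t.
    move=> t nt.
    have Rt : R t.
      have -> : t = a * k * (c * t) by rewrite mulrA akc mul1r.
      by apply: T => //; apply: nM.
    apply: NNPP => mt.
    have [u [Ru tu]] := mU t Rt mt.
    by apply: n1; rewrite -tu mulrC; apply: nM => //; apply: F1.
  have [r [Rr nr]] := Hres _ (P0 a k ma wk).
  have Rak : R (a * k).
    have -> : a * k = (a * k - r) + r by rewrite subrK.
    by apply: sr_add => //; apply: mR; apply: nsubm.
  by apply: nak; apply: F3; apply: (in_m HR Hl Hw wI).
move=> z [s [Hs ->]] j [s' [Hs' ->]].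
rewrite mulr_suml; apply: sr_sum => // p ps; rewrite mulr_sumr; apply: sr_sum => // q qs.
have [mp1 mp2] := Hs p ps; have [wq1 wq2] := Hs' q qs.
have -> : p.1 * p.2 * (q.1 * q.2) = p.2 * q.2 * (p.1 * q.1) by ring.
by apply: T => //; apply: P.
Qed.

Lemma alpha_unit (Q : comUnitRingType) (R m : Q -> Prop) alpha :
  is_subring R -> total_ring_of_fractions R -> local_with R m ->
  (exists x, m x /\ regular_in R x) -> m alpha ->
  qseteq (smul alpha m) (Defs.prod m m) -> alpha \is a GRing.unit.
Proof.
move=> HR [Hu _] [[mR _] _ _] [x [mx [Rx xreg]]] ma [_ Hsq].
have [y [my xx]] := Hsq _ (prod_mem mx mx).
apply: Hu; split; first exact: mR.
move=> y0 Ry0 ay0.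
have HR' := HR; case: HR' => [R0 R1 RB RM].
apply: (xreg) => //; apply: (xreg); first exact: RM.
by rewrite mulrA xx mulrAC ay0 mul0r.
Qed.

Lemma transport (Q : comUnitRingType) (R m w : Q -> Prop) y yi :
  is_subring R -> canonical_module R m w -> colon R w y -> w yi -> y * yi = 1 ->
  gorenstein R m.
Proof.
move=> HR [[w0 wD wM] [_ [x [mx rx faith [s [ws nxs soc gen]]]]]] Cy wyi yyi.
have HR' := HR; case: HR' => [R0 R1 RB RM].
split.
  split; [exact: R0 | exact: sr_add | move=> r z Rr Rz; exact: RM].
split.
  exists [:: 1]; split.
    move=> z Rz; exists [:: z]; split => //; split.
      by case=> [|[|i]] //=.
    by rewrite big_ord1 /= mulr1.
  move=> z [c [_ [Rc ->]]]; rewrite big_ord1 /= mulr1; exact: Rc.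
exists x; split => //.
  by move=> r Rr H; have := H 1 R1; rewrite mulr1.
exists (y * s); split.
- exact: Cy.
- move=> [r [Rr e]]; apply: nxs; exists (r * yi); split; first exact: wM.
  by rewrite mulrA -e -mulrA (mulrC s) mulrA yyi mul1r.
- move=> a ma; have [k [wk e]] := soc a ma.
  exists (y * k); split; first exact: Cy.
  by rewrite mulrCA e mulrCA.
- move=> w' Rw' H.
  have wk0 : w (w' * yi) by exact: wM.
  have [|r [Rr [k [wk e]]]] := gen (w' * yi) wk0.
    move=> a ma; have [r [Rr e]] := H a ma.
    exists (r * yi); split; first exact: wM.
    by rewrite mulrA e mulrA.
  exists r; split => //; exists (y * k); split; first exact: Cy.
  have -> : w' - r * (y * s) = y * (w' * yi - r * s).
    by rewrite mulrBr (mulrCA y w') yyi mulr1 (mulrCA y r).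
  by rewrite e mulrCA.
Qed.

Lemma colon_m (Q : comUnitRingType) (R m w : Q -> Prop) y k :
  is_subring R -> local_with R m -> canonical_module R m w -> ~ gorenstein R m ->
  colon R w y -> w k -> m (y * k).
Proof.
move=> HR Hl Hc ng Cy wk.
have [[w0 wD wM] _] := Hc.
apply: NNPP => nyk.
have [_ _ mU] := Hl.
have [u [Ru yku]] := mU _ (Cy k wk) nyk.
apply: ng; apply: (transport HR Hc Cy (wM u k Ru wk)).
by rewrite mulrCA mulrC.
Qed.

Lemma part2 (Q : comUnitRingType) (R m w : Q -> Prop) alpha :
  is_subring R -> local_with R m -> canonical_module R m w -> ~ gorenstein R m ->
  m alpha -> alpha \is a GRing.unit -> qseteq (smul alpha m) (Defs.prod m m) ->
  qseteq (colon (colon R w) m) (fun x => exists y, colon R w y /\ x = y / alpha).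
Proof.
move=> HR Hl Hc ng ma ua [_ Hsq]; split.
  move=> z Hz; exists (z * alpha); split; first exact: Hz.
  by rewrite mulrK.
move=> z [y [Cy ->]] j mj k wk.
have myk := colon_m HR Hl Hc ng Cy wk.
have [n [mn e]] := Hsq _ (prod_mem myk mj).
have -> : y / alpha * j * k = alpha^-1 * (y * k * j) by ring.
rewrite e mulKr //.
by have [[mR _] _ _] := Hl; apply: mR.
Qed.

Lemma part3 (Q : comUnitRingType) (R m w : Q -> Prop) alpha :
  is_subring R -> local_with R m -> submodule R w -> qsubset w (integral_closure R) ->
  m alpha -> alpha \is a GRing.unit -> qseteq (smul alpha m) (Defs.prod m m) ->
  ~ almost_gorenstein R m w -> ~ colon R w alpha.
Proof.
move=> HR Hl Hw wI ma ua [_ Hsq] nag Cw; apply: nag.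
have [[mR [m0 mD mM]] _ _] := Hl.
move=> z [s [Hs ->]]; apply: sm_sum => // p ps.
have [mp1 wp2] := Hs p ps.
have mak := in_m HR Hl Hw wI ma wp2 (Cw _ wp2).
have [n [mn e]] := Hsq _ (prod_mem mp1 mak).
have -> : p.1 * p.2 = alpha^-1 * (p.1 * (alpha * p.2)) by rewrite mulrCA mulKr.
by rewrite e mulKr.
Qed.

Definition annN (Q : comUnitRingType) (R : Q -> Prop) (g x : Q) (N : nat) (z : Q) :=
  R z /\ (g + x ^+ N) * z = 0.

Definition IK (Q : comUnitRingType) (R : Q -> Prop) (g x : Q) (K : nat) (z : Q) :=
  exists s : seq (nat * Q),
    (forall p, p \in s -> (p.1 < K)%N /\ annN R g x p.1 p.2) /\ z = \sum_(p <- s) p.2.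

Lemma reg_pow (Q : comUnitRingType) (R : Q -> Prop) x :
  is_subring R -> regular_in R x -> forall i y, R y -> x ^+ i * y = 0 -> y = 0.
Proof.
move=> HR [Rx xr]; have [R0 R1 RB RM] := HR; elim=> [|i IH] y Ry; first by rewrite expr0 mul1r.
rewrite exprS -mulrA => h; apply: IH => //; apply: xr => //.
by apply: RM => //; apply: sr_exp.
Qed.

Lemma reg_diff_lt (Q : comUnitRingType) (R m : Q -> Prop) x i K y :
  is_subring R -> local_with R m -> m x -> regular_in R x -> (i < K)%N -> R y ->
  (x ^+ i - x ^+ K) * y = 0 -> y = 0.
Proof.
move=> HR [[mR [m0 mD mM]] m1 mU] mx rx hiK Ry h.
have HR' := HR; case: HR' => [R0 R1 RB RM].
have Rx : R x by apply: mR.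
set d := (K - i)%N.
have hd : (0 < d)%N by rewrite subn_gt0.
have eK : x ^+ K = x ^+ i * x ^+ d by rewrite -exprD subnKC // ltnW.
have mxd : m (x ^+ d).
  rewrite -(prednK hd) exprSr; apply: mM => //; exact: sr_exp.
have R1d : R (1 - x ^+ d) by apply: RB => //; apply: sr_exp.
have n1d : ~ m (1 - x ^+ d).
  move=> h1; apply: m1.
  have -> : (1 : Q) = (1 - x ^+ d) + x ^+ d by rewrite subrK.
  exact: mD.
have [u [Ru hu]] := mU _ R1d n1d.
apply: (reg_pow HR rx (i := i)) => //.
transitivity ((x ^+ i - x ^+ K) * y * u); last by rewrite h mul0r.
transitivity (x ^+ i * y * ((1 - x ^+ d) * u)); first by rewrite hu mulr1.
rewrite eK; ring.
Qed.

Lemma reg_diff (Q : comUnitRingType) (R m : Q -> Prop) x i K y :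
  is_subring R -> local_with R m -> m x -> regular_in R x -> i <> K -> R y ->
  (x ^+ i - x ^+ K) * y = 0 -> y = 0.
Proof.
move=> HR Hl mx rx hiK Ry h.
case: (ltngtP i K) => [lt|gt|eq]; first exact: (reg_diff_lt HR Hl mx rx lt).
  apply: (reg_diff_lt HR Hl mx rx gt) => //.
  by rewrite -opprB mulNr h oppr0.
by case: hiK.
Qed.

Lemma indep (Q : comUnitRingType) (R m : Q -> Prop) g x :
  is_subring R -> local_with R m -> m x -> regular_in R x -> R g ->
  forall (s : seq (nat * Q)) K z,
  (forall p, p \in s -> p.1 <> K /\ annN R g x p.1 p.2) ->
  z = \sum_(p <- s) p.2 -> annN R g x K z -> z = 0.
Proof.
move=> HR Hl mx rx Rg.
have HR' := HR; case: HR' => [R0 R1 RB RM].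
have Rx : R x by have [[mR _] _ _] := Hl; apply: mR.
have Rxp : forall n, R (x ^+ n) by move=> n; apply: sr_exp.
move=> s; move: {2}(size s) (erefl (size s)) => n; elim: n s => [|n IH].
  by case=> // _ K z _ hz _; rewrite hz big_nil.
case=> // -[i zi] s /= [hn] K z Hs hz [Rz hK].
have [iK [Rzi hi]] := Hs (i, zi) (mem_head _ _).
have Hs' : forall p, p \in s -> p.1 <> K /\ annN R g x p.1 p.2.
  by move=> p ps; apply: Hs; rewrite inE ps orbT.
apply: (reg_diff HR Hl mx rx iK) => //.
apply: (IH (map (fun p => (p.1, (x ^+ i - x ^+ p.1) * p.2)) s) _ K); first by rewrite size_map.
- move=> p /mapP [q qs ->] /=.
  have [qK [Rq hq]] := Hs' q qs.
  split => //; split; first by apply: RM => //; apply: RB.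
  by rewrite mulrCA hq mulr0.
- rewrite big_map.
  transitivity ((g + x ^+ i) * z - (g + x ^+ K) * z); first by ring.
  rewrite hK subr0 hz big_cons mulrDr /= hi add0r mulr_sumr.
  apply: eq_big_seq => p ps.
  have [_ [_ hp]] := Hs' p ps.
  apply/eqP; rewrite -subr_eq0.
  have -> : (g + x ^+ i) * p.2 - (x ^+ i - x ^+ p.1) * p.2 = (g + x ^+ p.1) * p.2 by ring.
  by rewrite hp.
- split; first by apply: RM => //; apply: RB.
  by rewrite mulrCA hK mulr0.
Qed.

Lemma IK_sub (Q : comUnitRingType) (R : Q -> Prop) g x K :
  is_subring R -> submodule R (IK R g x K).
Proof.
move=> HR; have [R0 R1 RB RM] := HR; split.
- by exists [::]; split => //; rewrite big_nil.
- move=> a b [s1 [H1 ->]] [s2 [H2 ->]]; exists (s1 ++ s2); split; last by rewrite big_cat.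
  by move=> p; rewrite mem_cat => /orP [] h; [apply: H1 | apply: H2].
- move=> r a Rr [s [H ->]]; exists (map (fun p => (p.1, r * p.2)) s); split.
    move=> p /mapP [q qs ->] /=; have [qK [Rq hq]] := H q qs.
    split => //; split; first exact: RM.
    by rewrite mulrCA hq mulr0.
  by rewrite big_map mulr_sumr.
Qed.

Lemma IK_mono (Q : comUnitRingType) (R : Q -> Prop) g x K K' z :
  (K <= K')%N -> IK R g x K z -> IK R g x K' z.
Proof.
move=> hK [s [H ->]]; exists s; split => // p ps.
have [h1 h2] := H p ps; split => //; exact: leq_trans h1 hK.
Qed.

Lemma reg_exists (Q : comUnitRingType) (R m : Q -> Prop) g x :
  is_subring R -> local_with R m -> noetherian R -> m x -> regular_in R x -> R g ->
  exists K, (2 <= K)%N /\ regular_in R (g + x ^+ K).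
Proof.
move=> HR Hl Hn mx rx Rg.
have HR' := HR; case: HR' => [R0 R1 RB RM].
have Rx : R x by have [[mR _] _ _] := Hl; apply: mR.
pose I z := exists K, IK R g x K z.
have II : ideal_of R I.
  split.
    move=> z [K [s [H ->]]]; apply: sr_sum => // p ps.
    by have [_ [Rp _]] := H p ps.
  split.
  - by exists 0%N; exists [::]; split => //; rewrite big_nil.
  - move=> a b [K1 h1] [K2 h2]; exists (maxn K1 K2).
    have [_ SD _] := IK_sub g x (maxn K1 K2) HR; apply: SD.
      by apply: IK_mono h1; apply: leq_maxl.
    by apply: IK_mono h2; apply: leq_maxr.
  - by move=> r a Rr [K h]; exists K; have [_ _ SMK] := IK_sub g x K HR; apply: SMK.
have [c [Ic cI]] := Hn I II.
have cm : forall i, (i < size c)%N -> I c`_i by move=> i hi; apply: cI; apply: span_mem.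
have [K HK] : exists K, forall i, (i < size c)%N -> IK R g x K c`_i.
  suff : forall n, (n <= size c)%N -> exists K, forall i, (i < n)%N -> IK R g x K c`_i.
    by move=> /(_ (size c) (leqnn _)).
  elim=> [|n IH] hn; first by exists 0%N.
  have [K1 h1] := IH (ltnW hn).
  have [K2 h2] := cm n hn.
  exists (maxn K1 K2) => i; rewrite ltnS leq_eqVlt => /orP [/eqP ->|hi].
    by apply: IK_mono h2; apply: leq_maxr.
  by apply: IK_mono (h1 i hi); apply: leq_maxl.
have spK : qsubset (Defs.span R c) (IK R g x K) by apply: span_sub; [exact: IK_sub|].
exists (maxn K 2); split; first exact: leq_maxr.
split; first by apply: sr_add => //; apply: sr_exp.
move=> y Ry e.
have Ay : annN R g x (maxn K 2) y by [].
have [s [Hs ys]] : IK R g x K y.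
  apply: spK; apply: Ic; exists (maxn K 2).+1; exists [:: (maxn K 2, y)]; split.
    by move=> p; rewrite inE => /eqP -> /=.
  by rewrite big_cons big_nil addr0.
apply: (indep HR Hl mx rx Rg (K := maxn K 2) _ ys Ay).
move=> p ps; have [h1 h2] := Hs p ps; split => // h.
by move: h1; rewrite h ltnNge leq_maxl.
Qed.

Lemma exists_min (Q : comUnitRingType) (R m : Q -> Prop) :
  (exists g, qseteq m (Defs.span R g)) -> exists g, min_gens R m g.
Proof.
move=> [g0 H0].
suff : forall n g, (size g <= n)%N -> qseteq m (Defs.span R g) -> exists g, min_gens R m g.
  by move=> /(_ _ g0 (leqnn _) H0).
elim=> [|n IH] g hg Hg.
  exists g; split => // g' _; by rewrite (leq_trans hg).
case: (classic (exists g', qseteq m (Defs.span R g') /\ (size g' < size g)%N)).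
  move=> [g' [Hg' lt]]; apply: (IH g') => //.
  by rewrite -ltnS (leq_trans lt hg).
move=> H; exists g; split => // g' Hg'; rewrite leqNgt; apply/negP => lt.
by apply: H; exists g'.
Qed.

Lemma replace (Q : comUnitRingType) (R m : Q -> Prop) g x k K :
  is_subring R -> local_with R m -> m x -> min_gens R m g -> (k < size g)%N -> (2 <= K)%N ->
  min_gens R m (set_nth 0 g k (g`_k + x ^+ K)).
Proof.
move=> HR Hl mx [[Hm1 Hm2] Hmin] hk hK.
have HR' := HR; case: HR' => [R0 R1 RB RM].
have Hl' := Hl; case: Hl' => [[mR [m0 mD mM]] m1 mU].
set g' := set_nth 0 g k (g`_k + x ^+ K).
have sz : size g' = size g by rewrite size_set_nth; apply/maxn_idPr.
have ng' : forall j, g'`_j = if j == k then g`_k + x ^+ K else g`_j.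
  by move=> j; rewrite nth_set_nth.
have gm : forall j, (j < size g)%N -> m g`_j by move=> j hj; apply: Hm2; apply: span_mem.
have hK1 : (0 < K.-1)%N by rewrite -ltnS prednK // ltnW.
have mxK1 : m (x ^+ K.-1).
  rewrite -(prednK hK1) exprSr; apply: mM => //; apply: sr_exp => //; exact: mR.
have mxK : m (x ^+ K) by rewrite -(prednK (ltnW hK)) exprSr; apply: mM => //; apply: mR.
have Sg' := span_submod g' HR.
have [S0 SD SM] := Sg'.
have key : Defs.span R g' g`_k.
  have [c [_ [Rc ex]]] := Hm1 x mx.
  pose d i := x ^+ K.-1 * c`_i.
  have md : forall i, m (d i) by move=> i; rewrite /d mulrC; apply: mM.
  have exK : x ^+ K = \sum_(i < size g) d i * g`_i.
    have e1 : x ^+ K = x ^+ K.-1 * x by rewrite -exprSr prednK // ltnW.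
    have e2 : x ^+ K.-1 * (\sum_(i < size g) c`_i * g`_i) = \sum_(i < size g) d i * g`_i.
      by rewrite mulr_sumr; apply: eq_bigr => i _; rewrite /d mulrA.
    by rewrite e1 -e2 -ex.
  pose ko := Ordinal hk.
  rewrite (bigD1 ko) //= in exK.
  set W := \sum_(i < size g | i != ko) d i * g`_i in exK.
  have SW : Defs.span R g' W.
    rewrite /W; elim/big_ind: _ => // i hi.
    apply: SM; first by apply: mR.
    have -> : g`_i = g'`_i.
      by rewrite ng' ifN //; apply: contra hi => /eqP hik; apply/eqP; apply: val_inj.
    by apply: span_mem => //; rewrite sz.
  have R1d : R (1 + d k) by apply: sr_add => //; apply: mR.
  have n1d : ~ m (1 + d k).
    move=> h; apply: m1.
    have -> : (1 : Q) = (1 + d k) + - d k by rewrite addrK.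
    apply: (mD) => //; apply: (sm_opp HR); [exact: (And3 m0 mD mM) | exact: md].
  have [u [Ru hu]] := mU _ R1d n1d.
  have -> : g`_k = u * (g'`_k + - W).
    rewrite ng' eqxx exK.
    transitivity (g`_k * ((1 + d k) * u)); first by rewrite hu mulr1.
    ring.
  apply: SM => //; apply: SD; first by apply: span_mem => //; rewrite sz.
  exact: (sm_opp HR).
split; first split.
- move=> z mz; apply: (span_sub Sg' _ (Hm1 z mz)) => j hj.
  case: (eqVneq j k) => [->|hjk]; first exact: key.
  have -> : g`_j = g'`_j by rewrite ng' ifN.
  by apply: span_mem; rewrite ?sz.
- apply: span_sub; first exact: (And3 m0 mD mM).
  move=> j; rewrite sz ng' => hj; case: ifP => _; last exact: gm.
  by apply: mD => //; apply: gm.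
- by move=> g'' h; rewrite sz; apply: Hmin.
Qed.

Lemma part4 (Q : comUnitRingType) (R m : Q -> Prop) :
  is_subring R -> local_with R m -> noetherian R ->
  (exists x, m x /\ regular_in R x) ->
  exists g : seq Q, min_gens R m g /\ forall i, (i < size g)%N -> regular_in R g`_i.
Proof.
move=> HR Hl Hn [x [mx rx]].
have Hl' := Hl; case: Hl' => [Im m1 mU].
have [g0 Hg0] := exists_min (Hn m Im).
suff : forall k, (k <= size g0)%N -> exists g, [/\ min_gens R m g, size g = size g0 &
          forall i, (i < k)%N -> regular_in R g`_i].
  by move=> /(_ _ (leqnn _)) [g [Hg sz Hr]]; exists g; split => // i; rewrite sz; apply: Hr.
elim=> [|k IH] hk; first by exists g0; split.
have [g [Hg sz Hr]] := IH (ltnW hk).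
have hkg : (k < size g)%N by rewrite sz.
have Rgk : R g`_k.
  have [[_ Hm2] _] := Hg; have [mR _] := Im; apply: mR; apply: Hm2; exact: span_mem.
have [K [hK rK]] := reg_exists HR Hl Hn mx rx Rgk.
exists (set_nth 0 g k (g`_k + x ^+ K)); split.
- exact: replace.
- by rewrite size_set_nth -sz; apply/maxn_idPr.
- move=> i hi; rewrite nth_set_nth /=; case: ifP => [_|/negbT hik]; first exact: rK.
  apply: Hr; by rewrite ltn_neqAle hik -ltnS.
Qed.

Theorem lemma2p5 (Q : comUnitRingType) (R m w : Q -> Prop) (alpha : Q) :
  is_subring R -> total_ring_of_fractions R -> noetherian R ->
  local_with R m -> krull_dim_one R ->
  (exists x, m x /\ regular_in R x) ->           (* Cohen-Macaulay, dim 1 *)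
  canonical_module R m w ->
  qsubset R w -> qsubset w (integral_closure R) ->
  m alpha ->
  [/\ (gAGL R m w -> forall n, local_with (colon m m) n ->
         (forall b, colon m m b -> exists r, R r /\ n (b - r)) ->
         qsubset (prod m m) (colon R (prod w w))),
      (~ gorenstein R m -> qseteq (smul alpha m) (prod m m) ->
         qseteq (colon (colon R w) m)
                (fun x => exists y, colon R w y /\ x = y / alpha)),
      (qseteq (smul alpha m) (prod m m) -> ~ almost_gorenstein R m w ->
         ~ colon R w alpha)
    & exists g : seq Q, min_gens R m g /\
         forall i, (i < size g)%N -> regular_in R g`_i].
Proof.
move=> HR Htf Hn Hl _ Hx Hc Rw wI ma.
have Hw : submodule R w by case: Hc.
split.
- move=> Hg n Hnl Hres; exact: (part1 HR Hl Hw wI Hg Hnl Hres).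
- move=> ng Hsq; apply: (part2 HR Hl Hc ng ma) => //.
  exact: (alpha_unit HR Htf Hl Hx ma Hsq).
- move=> Hsq nag; apply: (part3 HR Hl Hw wI ma) => //.
  exact: (alpha_unit HR Htf Hl Hx ma Hsq).
- exact: part4.
Qed.
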